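(* Let $X\subset\mathbb{R}^2$ be a finite set with centroid $M$ and $1$-centre $C$. Then $M$ is the quadratic min-power centre of $X$ if and only if $M=C$.
   Context: Writing $X=\{x_j:j\in J\}$, the quadratic min-power centre is the unique minimiser of $P(s)=\sum_{j\in J}\|s-x_j\|^2+\max_{j\in J}\|s-x_j\|^2$; $M=\frac{1}{|J|}\sum_j x_j$; $C$ is the centre of the minimum enclosing circle of $X$. *)

(* Defs.v *)
(* points of the plane R^2 are pairs (R * R) over an
   abstract R : realFieldType (the statement only uses field/order operations). *)
From mathcomp Require Import all_boot all_order all_algebra.
Set Implicit Arguments. Unset Strict Implicit. Unset Printing Implicit Defensive.
Import Order.TTheory GRing.Theory Num.Theory.
Local Open Scope ring_scope.

Definition sqdist (R : realFieldType) (s x : R * R) : R :=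
  (s.1 - x.1) ^+ 2 + (s.2 - x.2) ^+ 2.

(* max_j ||s - x_j||^2 ; all terms are >= 0, so 0 is a neutral element *)
Definition maxsqdist (R : realFieldType) (n : nat) (x : 'I_n -> R * R) (s : R * R) : R :=
  \big[Num.max/0]_(j < n) sqdist s (x j).

Definition qpower (R : realFieldType) (n : nat) (x : 'I_n -> R * R) (s : R * R) : R :=
  \sum_(j < n) sqdist s (x j) + maxsqdist x s.

Definition is_qmp_centre (R : realFieldType) (n : nat) (x : 'I_n -> R * R) (s : R * R) : Prop :=
  (forall t, qpower x s <= qpower x t) /\
  (forall t, (forall u, qpower x t <= qpower x u) -> t = s).

Definition centroid (R : realFieldType) (n : nat) (x : 'I_n -> R * R) : R * R :=
  ((\sum_(j < n) (x j).1) / n%:R, (\sum_(j < n) (x j).2) / n%:R).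

(* c is the centre of the minimum enclosing circle (1-centre):
   it minimises the (squared) radius max_j ||c - x_j||^2 of the enclosing circle *)
Definition is_one_centre (R : realFieldType) (n : nat) (x : 'I_n -> R * R) (c : R * R) : Prop :=
  forall t, maxsqdist x c <= maxsqdist x t.

(* Main.v *)
Require Import Defs.
From mathcomp Require Import all_boot all_order all_algebra.
From mathcomp Require Import reals ring lra.
Set Implicit Arguments. Unset Strict Implicit. Unset Printing Implicit Defensive.
Import Order.TTheory GRing.Theory Num.Theory.
Local Open Scope ring_scope.

Section S.
Variable R : realFieldType.

Lemma sumS n (x : 'I_n -> R * R) (M : R * R) (s : R * R) :
  \sum_(j < n) (x j).1 = n%:R * M.1 -> \sum_(j < n) (x j).2 = n%:R * M.2 ->
  \sum_(j < n) sqdist s (x j) = \sum_(j < n) sqdist M (x j) + n%:R * sqdist s M.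
Proof.
case: M => m1 m2 /= h1 h2.
have -> : \sum_(j < n) sqdist s (x j) = \sum_(j < n) (sqdist (m1,m2) (x j)
   + ((s.1-m1)*(s.1+m1) + (s.2-m2)*(s.2+m2)) - (2*(s.1-m1)) * (x j).1 - (2*(s.2-m2)) * (x j).2).
  by apply: eq_bigr => j _; rewrite /sqdist /=; ring.
rewrite !sumrB big_split /= -!mulr_sumr h1 h2 sumr_const card_ord /sqdist /=.
rewrite -[_ *+ n]mulr_natl; ring.
Qed.

Lemma le_bigmax0 n (f : 'I_n -> R) j : f j <= \big[Num.max/0]_(i < n) f i.
Proof. by rewrite (bigD1 j) //= le_max lexx. Qed.

Lemma bigmax0_le n (f : 'I_n -> R) B : 0 <= B -> (forall j, f j <= B) ->
  \big[Num.max/0]_(i < n) f i <= B.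
Proof.
move=> h0 hf; apply: (big_ind (fun y => y <= B)) => // a b ha hb.
by rewrite ge_max ha hb.
Qed.

Lemma sqdist_ge0 (a b : R * R) : 0 <= sqdist a b.
Proof. by rewrite /sqdist addr_ge0 // sqr_ge0. Qed.

Lemma sqdist_conv (M C x : R * R) e :
  sqdist ((1-e)*M.1 + e*C.1, (1-e)*M.2 + e*C.2) x =
  (1-e) * sqdist M x + e * sqdist C x - e*(1-e) * sqdist M C.
Proof. rewrite /sqdist /=; ring. Qed.

Lemma Fconv n (x : 'I_n -> R * R) (M C : R * R) e : (0 < n)%N -> 0 <= e <= 1 ->
  maxsqdist x ((1-e)*M.1 + e*C.1, (1-e)*M.2 + e*C.2) <=
  (1-e) * maxsqdist x M + e * maxsqdist x C - e*(1-e) * sqdist M C.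
Proof.
move=> hn /andP[e0 e1].
have key : forall j, sqdist ((1-e)*M.1 + e*C.1, (1-e)*M.2 + e*C.2) (x j) <=
  (1-e) * maxsqdist x M + e * maxsqdist x C - e*(1-e) * sqdist M C.
  move=> j; rewrite sqdist_conv lerD2r lerD //.
    by apply: ler_wpM2l; [lra | apply: le_bigmax0].
  by apply: ler_wpM2l => //; apply: le_bigmax0 (fun i => sqdist C (x i)) j.
apply: bigmax0_le => //.
exact: le_trans (sqdist_ge0 _ _) (key (Ordinal hn)).
Qed.

Lemma sq0 (a b : R * R) : sqdist a b <= 0 -> a = b.
Proof.
case: a b => [a1 a2] [b1 b2]; rewrite /sqdist /= => h.
have h1 : (a1 - b1)^+2 = 0 by apply/eqP; rewrite eq_le sqr_ge0 andbT;
  move: (sqr_ge0 (a2-b2)) => ?; lra.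
have h2 : (a2 - b2)^+2 = 0 by apply/eqP; rewrite eq_le sqr_ge0 andbT;
  move: (sqr_ge0 (a1-b1)) => ?; lra.
move/eqP: h1; rewrite sqrf_eq0 subr_eq0 => /eqP->.
by move/eqP: h2; rewrite sqrf_eq0 subr_eq0 => /eqP->.
Qed.
End S.

Unset Implicit Arguments.
Theorem corollary2 (R : realType) (n : nat) (x : 'I_n -> R * R)
  (hn : (0 < n)%N) (hinj : injective x) (C : R * R)
  (hC : is_one_centre x C) :
  is_qmp_centre x (centroid x) <-> centroid x = C.
Proof.
set M := centroid x.
have hN : (n%:R : R) != 0 by rewrite pnatr_eq0 -lt0n.
have hN0 : (0 : R) <= n%:R by rewrite ler0n.
have h1 : \sum_(j < n) (x j).1 = n%:R * M.1 by rewrite /M /centroid /= mulrC divfK.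
have h2 : \sum_(j < n) (x j).2 = n%:R * M.2 by rewrite /M /centroid /= mulrC divfK.
have PS : forall s, qpower x s = \sum_(j < n) sqdist M (x j) + n%:R * sqdist s M + maxsqdist x s.
  by move=> s; rewrite /qpower (sumS s h1 h2).
split.
- move=> [hmin _].
  set N : R := n%:R.
  set e : R := (N + 2)^-1.
  have hN2 : 0 < N + 2 by rewrite /N; lra.
  have e0 : 0 < e by rewrite /e invr_gt0.
  have he : e * (N + 2) = 1 by rewrite /e mulVf // gt_eqF.
  have e1 : e <= 1.
    rewrite -he -[X in X <= _]mulr1; apply: ler_wpM2l; [exact: ltW | rewrite /N; lra].
  set s := ((1-e)*M.1 + e*C.1, (1-e)*M.2 + e*C.2).
  set d := sqdist M C.
  have hs : sqdist s M = (e*e) * d by rewrite /s /d /sqdist /=; ring.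
  have hF := Fconv x M C hn (introT andP (conj (ltW e0) e1)).
  have hCM : e * maxsqdist x C <= e * maxsqdist x M by apply: ler_wpM2l; [exact: ltW | exact: hC].
  have := hmin s; rewrite !PS hs.
  have -> : sqdist M M = 0 by rewrite /sqdist !subrr expr0n /= addr0.
  move=> hP.
  have H0 : 0 <= N * ((e*e) * d) - e*(1-e)*d by rewrite /N /d /s in hF hP *; lra.
  have eq : N * ((e*e) * d) - e*(1-e)*d = e*d*(e*(N+2)-1) - (e*e)*d by ring.
  rewrite eq he subrr mulr0 sub0r oppr_ge0 in H0.
  apply: sq0; rewrite -/d.
  rewrite leNgt; apply/negP => dpos.
  have : 0 < (e*e) * d.
 by rewrite mulr_gt0 // mulr_gt0.
  by rewrite ltNge H0.
- move=> MC.
  have hmin : forall t, qpower x M <= qpower x t.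
    move=> t; rewrite !PS.
    have -> : sqdist M M = 0 by rewrite /sqdist !subrr expr0n /= addr0.
    rewrite mulr0 addr0 -addrA lerD2l MC -[X in X <= _]add0r lerD //.
      by rewrite mulr_ge0 // sqdist_ge0.
  split => // t ht.
  have := ht M; rewrite !PS.
  have -> : sqdist M M = 0 by rewrite /sqdist !subrr expr0n /= addr0.
  have := hmin t; rewrite !PS.
  have -> : sqdist M M = 0 by rewrite /sqdist !subrr expr0n /= addr0.
  move=> _ h.
  have hFt : maxsqdist x M <= maxsqdist x t by rewrite MC; exact: hC.
  have : n%:R * sqdist t M <= 0 by lra.
  rewrite pmulr_rle0; first exact: sq0.
  by rewrite lt0r hN.
Qed.
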